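(* If transformation graphs $G_1$ and $G_2$ reflect sequences of transitions $\sigma_1$ and $\sigma_2$ respectively, then $G_1\odot G_2$ reflects the concatenation $\sigma_1\sigma_2$.
   Context: Fix a finite set of clocks $X=\{x_0,x_1,\dots,x_m\}$, where $x_0$ is a special reference clock. A valuation is a map $v:X\to\mathbb{R}_{\ge 0}$ with $v(x_0)=0$. For $\delta\ge 0$, $v+\delta$ adds $\delta$ to every clock other than $x_0$; $[R]v$ sets the clocks of $R\subseteq X\setminus\{x_0\}$ to $0$. A guard is a conjunction of atomic constraints $x\sim c$ with $x\in X\setminus\{x_0\}$, $\sim\in\{<,\le,=,\ge,>\}$, $c\in\mathbb{N}$. A transition $t$ is a pair $(g,R)$ of a guard and a reset set $R\subseteq X\setminus\{x_0\}$; $v\xrightarrow{t}^{\delta}v'$ means $v+\delta\models g$ and $v'=[R](v+\delta)$. For $\sigma=t_1\cdots t_k$, $v_0\xrightarrow{\sigma}^{\delta}v_k$ means there are valuations $v_1,\dots,v_{k-1}$ and $\delta_i\ge0$ with $v_{i-1}\xrightarrow{t_i}^{\delta_i}v_i$ and $\delta=\sum_i\delta_i$. A loose valuation is a map $v:X\to\mathbb{R}$ with $v(x)\ge v(x_0)$ for all $x\in X$; $\mathit{norm}(v)$ is the valuation $x\mapsto v(x)-v(x_0)$. A weight is a pair $(\preccurlyeq,d)$ with $\preccurlyeq\in\{<,\le\}$, $d\in\mathbb{Z}$. A transformation graph with $k+1$ columns is a directed graph with vertex set $\{0,\dots,k\}\times X$ whose edges carry weights; vertex $(j,x)$ lies in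 column $j$. A solution of such a graph is a sequence $v_0,\dots,v_k$ of loose valuations such that for every edge $(i,x)\to(p,y)$ of weight $(\preccurlyeq,d)$ we have $v_p(y)-v_i(x)\preccurlyeq d$. A transformation graph with $k+1$ columns reflects a sequence $\sigma$ if (i) for every solution $v_0,\dots,v_k$ we have $\mathit{norm}(v_0)\xrightarrow{\sigma}^{\delta}\mathit{norm}(v_k)$ with $\delta=v_0(x_0)-v_k(x_0)$, and (ii) whenever $v_0\xrightarrow{\sigma}^{\delta}v'$ for valuations $v_0,v'$, there is a solution $v_0,u_1,\dots,u_k$ with $u_k=v'-\delta$, where $v'-\delta$ is the loose valuation $x\mapsto v'(x)-\delta$ for all $x\in X$ (including $x_0$). Composition: if $G_1$ has $k_1$ columns and $G_2$ has $k_2$ columns, $G_1\odot G_2$ is the transformation graph with vertex set $\{0,\dots,k_1+k_2-1\}\times X$ whose edges are: the edges of $G_1$ (on columns $0,\dots,k_1-1$); the edges of $G_2$ shifted by $k_1$ columns (an edge $(i,x)\to(j,y)$ of $G_2$ becomes $(i+k_1,x)\to(j+k_1,y)$ with the same weight); and, for every $x\in X$, edges $(k_1-1,x)\to(k_1,x)$ and $(k_1,x)\to(k_1-1,x)$ of weight $(\le,0)$. *)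

(* Defs.v *)
From mathcomp Require Import all_boot.
From Stdlib Require Import Reals.

Unset Implicit Arguments.
Unset Strict Implicit.
Unset Printing Implicit Defensive.

Section TimedDefs.

(* Clock set X (finite), with distinguished reference clock x0. *)
Variables (X : finType) (x0 : X).

Local Open Scope R_scope.

Definition is_valuation (v : X -> R) : Prop :=
  v x0 = 0 /\ forall x, 0 <= v x.

Definition delay (v : X -> R) (d : R) : X -> R :=
  fun x => if x == x0 then v x else v x + d.

Definition reset (Rs : {set X}) (v : X -> R) : X -> R :=
  fun x => if x \in Rs then 0 else v x.

Inductive cmp := CLt | CLe | CEq | CGe | CGt.

Definition cmp_sat (o : cmp) (a b : R) : Prop :=
  match o with
  | CLt => a < b | CLe => a <= b | CEq => a = b | CGe => a >= b | CGt => a > b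
  end.

Record atom := Atom { at_clock : X; at_op : cmp; at_const : nat }.

Definition guard := seq atom.

Definition guard_sat (v : X -> R) (g : guard) : Prop :=
  forall a, List.In a g -> cmp_sat (at_op a) (v (at_clock a)) (INR (at_const a)).

Record transition := Trans { tr_guard : guard; tr_reset : {set X} }.

Definition wf_transition (t : transition) : Prop :=
  x0 \notin tr_reset t /\ forall a, List.In a (tr_guard t) -> at_clock a != x0.

Definition step (v : X -> R) (t : transition) (d : R) (v' : X -> R) : Prop :=
  guard_sat (delay v d) (tr_guard t) /\
  forall x, v' x = reset (tr_reset t) (delay v d) x.

Fixpoint steps (v : X -> R) (s : seq transition) (d : R) (v' : X -> R) : Prop :=
  match s with
  | [::] => d = 0 /\ forall x, v' x = v x
  | t :: s' => exists (d1 : R) (v1 : X -> R),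
      0 <= d1 /\ is_valuation v1 /\ step v t d1 v1 /\ steps v1 s' (d - d1) v'
  end.

Definition is_loose (v : X -> R) : Prop := forall x, v x0 <= v x.

Definition norm (v : X -> R) : X -> R := fun x => v x - v x0.

Record weight := Weight { w_strict : bool; w_bound : Z }.

Definition weight_sat (w : weight) (a : R) : Prop :=
  if w_strict w then a < IZR (w_bound w) else a <= IZR (w_bound w).

(** Transformation graph with k+1 columns: vertex set {0..k} x X,
    at most one weighted edge per ordered pair of vertices. *)
Record tgraph := TGraph {
  tg_k : nat;
  tg_edge : 'I_tg_k.+1 -> X -> 'I_tg_k.+1 -> X -> option weight }.


Definition is_solution (G : tgraph) (vs : 'I_(tg_k G).+1 -> X -> R) : Prop :=
  (forall i, is_loose (vs i)) /\
  forall i x p y w, tg_edge G i x p y = Some w ->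
    weight_sat w (vs p y - vs i x).

Definition reflects (G : tgraph) (s : seq transition) : Prop :=
  (forall vs : 'I_(tg_k G).+1 -> X -> R, is_solution G vs ->
     steps (norm (vs ord0)) s (vs ord0 x0 - vs ord_max x0) (norm (vs ord_max)))
  /\
  (forall (v0 v' : X -> R) (d : R),
     is_valuation v0 -> is_valuation v' -> steps v0 s d v' ->
     exists vs : 'I_(tg_k G).+1 -> X -> R,
       is_solution G vs /\ (forall x, vs ord0 x = v0 x) /\
       (forall x, vs ord_max x = v' x - d)).

(** If G1 has k1+1 columns and G2 has k2+1 columns,
    the composition has (k1+1)+(k2+1) columns, i.e. index k = k1+k2+1:
    columns 0..k1 carry G1, columns k1+1..k1+k2+1 carry G2 shifted by k1+1,
    and columns k1, k1+1 are linked by (<=,0) edges in both directions. *)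
Local Close Scope R_scope.

Definition compose (G1 G2 : tgraph) : tgraph :=
  @TGraph (addn (tg_k G1) (tg_k G2)).+1
    (fun i x j y =>
       let k1 := tg_k G1 in
       if (i < k1.+1)%N && (j < k1.+1)%N then
         tg_edge G1 (inord i) x (inord j) y
       else if (k1.+1 <= i)%N && (k1.+1 <= j)%N then
         tg_edge G2 (inord (i - k1.+1)%N) x (inord (j - k1.+1)%N) y
       else if (x == y) && (((i == k1 :> nat) && (j == k1.+1 :> nat)) ||
                            ((i == k1.+1 :> nat) && (j == k1 :> nat))) then
         Some (Weight false 0%Z)
       else None).

End TimedDefs.

Arguments is_valuation {X}.
Arguments delay {X}.
Arguments reset {X}.
Arguments guard_sat {X}.
Arguments wf_transition {X}.
Arguments step {X}.
Arguments steps {X}.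
Arguments is_loose {X}.
Arguments norm {X}.
Arguments tg_k {X}.
Arguments tg_edge {X}.
Arguments is_solution {X}.
Arguments reflects {X}.
Arguments compose {X}.

(* Main.v *)
Require Import Defs.
From mathcomp Require Import all_boot.
From Stdlib Require Import Reals Lra FunctionalExtensionality.
From mathcomp Require Import zify.
Open Scope R_scope.

Lemma steps_cat (X : finType) (x0 : X) s1 s2 : forall v w u d1 d2,
  steps x0 v s1 d1 w -> steps x0 w s2 d2 u -> steps x0 v (s1 ++ s2) (d1 + d2) u.
Proof.
elim: s1 => [|t s IH] v w u d1 d2 /=.
- move=> [Hd Hw] H2. rewrite Hd. have Ew : w = v by apply: functional_extensionality. subst w.
  by rewrite Rplus_0_l.
- move=> [d [v1 [H0 [Hv [Hs Hr]]]]] H2. exists d, v1; do 3 split => //.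
  have -> : d1 + d2 - d = (d1 - d) + d2 by ring. exact: IH Hr H2.
Qed.

Lemma steps_split (X : finType) (x0 : X) s1 s2 : forall v u d,
  is_valuation x0 v -> steps x0 v (s1 ++ s2) d u ->
  exists d1 w, is_valuation x0 w /\ steps x0 v s1 d1 w /\ steps x0 w s2 (d - d1) u.
Proof.
elim: s1 => [|t s IH] v u d Hv /=.
- move=> H; exists 0, v; split => //; split => //. by rewrite Rminus_0_r.
- move=> [d1 [v1 [H0 [Hv1 [Hs Hr]]]]].
  have [d2 [w [Hw [H1 H2]]]] := IH _ _ _ Hv1 Hr.
  exists (d1 + d2), w; split => //; split.
  + exists d1, v1; do 3 split => //. by have -> : d1 + d2 - d1 = d2 by ring.
  + by have -> : d - (d1 + d2) = d - d1 - d2 by ring.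
Qed.

Lemma sol_shift (X : finType) (x0 : X) (G : tgraph X) vs c :
  is_solution x0 G vs -> is_solution x0 G (fun i x => vs i x - c).
Proof.
move=> [Hl He]; split.
- move=> i x; have := Hl i x; lra.
- move=> i x p y w /He; by have -> : vs p y - c - (vs i x - c) = vs p y - vs i x by ring.
Qed.

Lemma inordK' (n m : nat) (H : (m < n.+1)%nat) : nat_of_ord (@inord n m) = m.
Proof. by rewrite inordK. Qed.

Theorem mainTheorem6 (X : finType) (x0 : X) (G1 G2 : tgraph X)
  (s1 s2 : seq (transition X)) :
  (forall t, List.In t s1 -> wf_transition x0 t) ->
  (forall t, List.In t s2 -> wf_transition x0 t) ->
  reflects x0 G1 s1 -> reflects x0 G2 s2 ->
  reflects x0 (compose G1 G2) (s1 ++ s2).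
Proof.
move=> _ _ [R1a R1b] [R2a R2b].
set K1 := tg_k G1 in R1a R1b *. set K2 := tg_k G2 in R2a R2b *.
split.
- move=> vs [Hl He].
  pose vs1 := fun (i : 'I_K1.+1) => vs (inord i).
  pose vs2 := fun (j : 'I_K2.+1) => vs (inord (j + K1.+1)).
  have S1 : is_solution x0 G1 vs1.
    split; first by move=> i; apply: Hl.
    move=> i x p y w Hw; apply: (He _ x _ y w) => /=.
    have Hi : (i < K1.+1)%nat := ltn_ord i.
    have Hp : (p < K1.+1)%nat := ltn_ord p.
    rewrite !inordK' ?Hi ?Hp /= ?inord_val //; apply: (leq_trans (ltn_ord _)); lia.
  have S2 : is_solution x0 G2 vs2.
    split; first by move=> i; apply: Hl.
    move=> i x p y w Hw; apply: (He _ x _ y w) => /=.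
    have Hi : (i < K2.+1)%nat := ltn_ord i.
    have Hp : (p < K2.+1)%nat := ltn_ord p.
    rewrite !inordK'; try (rewrite /K1 /K2 in Hi Hp *; lia).
    rewrite -/K1 -/K2. have -> : (i + K1.+1 < K1.+1)%nat = false by lia. have -> : (K1 < i + K1.+1)%nat = true by lia. have -> : (K1 < p + K1.+1)%nat = true by lia. rewrite /= !addnK !inord_val //.
  have Hlink : forall x, vs2 ord0 x = vs1 ord_max x.
    move=> x.
    have E1 := He (inord K1) x (inord K1.+1) x (Weight false 0).
    have E2 := He (inord K1.+1) x (inord K1) x (Weight false 0).
    rewrite /= !inordK' in E1 E2; try (rewrite /K1; lia).
    rewrite -/K1 in E1 E2. have F1 : (K1 == K1.+1) = false by lia. have F2 : (K1.+1 == K1) = false by lia. rewrite !(ltnn, ltnSn, eqxx, andbF, andbT, F1, F2) /= in E1 E2.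
    have := E1 erefl; have := E2 erefl; rewrite /weight_sat /= /vs1 /vs2 /=. rewrite add0n. rewrite -/K1; lra.
  have A1 := R1a _ S1. have A2 := R2a _ S2.
  have E0 : vs1 ord0 = vs ord0.
    rewrite /vs1; congr vs; apply: val_inj; rewrite /= inordK' //.
  have Em : vs2 ord_max = vs ord_max.
    rewrite /vs2; congr vs; apply: val_inj; rewrite /= inordK'; rewrite /K1 /K2; lia.
  have Fl : vs2 ord0 = vs1 ord_max by apply: functional_extensionality.
  rewrite -E0 -Em.
  have -> : vs1 ord0 x0 - vs2 ord_max x0 =
    (vs1 ord0 x0 - vs1 ord_max x0) + (vs2 ord0 x0 - vs2 ord_max x0) by rewrite Fl; ring.
  apply: steps_cat A1 _. by rewrite -Fl.
- move=> v0 v' d Hv0 Hv' /(steps_split _ _ _ _ _ _ _ Hv0) [d1 [w [Hw [H1 H2]]]].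
  have [vs1 [S1 [B1 C1]]] := R1b _ _ _ Hv0 Hw H1.
  have [vs2 [S2 [B2 C2]]] := R2b _ _ _ Hw Hv' H2.
  have S2' := sol_shift _ x0 _ _ d1 S2.
  pose vs := fun (i : 'I_(K1 + K2).+2) x =>
    if (i < K1.+1)%nat then vs1 (inord i) x else vs2 (inord (i - K1.+1)) x - d1.
  exists vs; split; [split|split].
  + move=> i x; rewrite /vs; case: ifP => _; [apply S1 | apply S2'].
  + move=> i x p y w' /=; rewrite -/K1 -/K2 /vs.
    case: (ltnP i K1.+1) => Hi; case: (ltnP p K1.+1) => Hp /=.
    * exact: (proj2 S1).
    *
      case: ifP => // /andP [/eqP <- /orP [/andP [/eqP Ei /eqP Ep]|/andP [/eqP Ei /eqP Ep]]] [<-];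
        last by move: Hi; rewrite Ei; lia.
      rewrite /weight_sat /=.
      have -> : (inord i : 'I_K1.+1) = ord_max by apply: val_inj; rewrite /= inordK'.
      have -> : (inord (p - K1.+1) : 'I_K2.+1) = ord0 by apply: val_inj; rewrite /= inordK' Ep subnn.
      rewrite C1 B2; lra.
    *
      case: ifP => // /andP [/eqP <- /orP [/andP [/eqP Ei /eqP Ep]|/andP [/eqP Ei /eqP Ep]]] [<-];
        first by move: Hp; rewrite Ep; lia.
      rewrite /weight_sat /=.
      have -> : (inord p : 'I_K1.+1) = ord_max by apply: val_inj; rewrite /= inordK'.
      have -> : (inord (i - K1.+1) : 'I_K2.+1) = ord0 by apply: val_inj; rewrite /= inordK' Ei subnn.
      rewrite C1 B2; lra.
    * exact: (proj2 S2').
  + move=> x; rewrite /vs /=.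
    have -> : (inord 0 : 'I_K1.+1) = ord0 by apply: val_inj; rewrite /= inordK'.
    exact: B1.
  + move=> x; rewrite /vs /= ltnNge.
    have -> : (K1 < (K1 + K2).+1)%nat by lia.
    have -> : (inord ((K1 + K2).+1 - K1.+1) : 'I_K2.+1) = ord_max.
      apply: val_inj; rewrite /= inordK'; lia.
    rewrite C2 /=; lra.
Qed.
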